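(* Let $k$ be a field of characteristic zero, $S=k[x,y]$, and let $I=(x^{\alpha},y^{\beta})$ and $J=(x^a,y^b)$ be ideals of $S$, where $a,b$ are positive integers, $0\le\alpha\le a$ and $0\le\beta\le b$. Then the graded $S$-module $I/J$ has the strong Lefschetz property.
   Context: $S$ is standard graded. A finite graded $S$-module $M=\bigoplus_i M_i$ has the strong Lefschetz property if there exists a linear form $\ell\in S_1$ such that the multiplication map $\times\ell^d\colon M_i\to M_{i+d}$ has maximal rank (is injective or surjective) for all $d>0$ and all $i$. *)

(* Defs.v *)
From HB Require Import structures.
From mathcomp Require Import all_boot all_order all_algebra.
From mathcomp Require Import mpoly.
Set Implicit Arguments. Unset Strict Implicit. Unset Printing Implicit Defensive.
Import GRing.Theory.
Local Open Scope ring_scope.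

Definition varx (k : fieldType) : {mpoly k[2]} := 'X_(@Ordinal 2 0 isT).
Definition vary (k : fieldType) : {mpoly k[2]} := 'X_(@Ordinal 2 1 isT).

(* f is homogeneous of (standard) degree d, i.e. f lies in S_d (0 included) *)
Definition homogeneous (k : fieldType) (d : nat) (f : {mpoly k[2]}) : bool :=
  f \is @ishomog1 2 k d mdeg.

Definition in_ideal2 (k : fieldType) (g1 g2 f : {mpoly k[2]}) : Prop :=
  exists u v : {mpoly k[2]}, f = u * g1 + v * g2.

(* For homogeneous ideals J ⊆ I of S (given by membership predicates), the
   graded module M = I/J has M_i = I_i / J_i.  The map  ×l^d : M_i -> M_(i+d)
   is injective resp. surjective: *)
Definition mult_injective (k : fieldType) (I J : {mpoly k[2]} -> Prop)
    (l : {mpoly k[2]}) (d i : nat) : Prop :=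
  forall f, homogeneous i f -> I f -> J (l ^+ d * f) -> J f.

Definition mult_surjective (k : fieldType) (I J : {mpoly k[2]} -> Prop)
    (l : {mpoly k[2]}) (d i : nat) : Prop :=
  forall g, homogeneous (i + d) g -> I g ->
    exists f, [/\ homogeneous i f, I f & J (g - l ^+ d * f)].

Definition strong_Lefschetz_quot (k : fieldType) (I J : {mpoly k[2]} -> Prop)
    : Prop :=
  exists l : {mpoly k[2]}, homogeneous 1 l /\
    forall d i : nat, (0 < d)%N ->
      mult_injective I J l d i \/ mult_surjective I J l d i.

(* Main.v *)
Require Import Defs.
From HB Require Import structures.
From mathcomp Require Import all_boot all_order all_algebra.
From mathcomp Require Import mpoly.
From mathcomp Require Import ring zify.
Set Implicit Arguments. Unset Strict Implicit. Unset Printing Implicit Defensive.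
Import GRing.Theory.
Local Open Scope ring_scope.


Section Uni.
Variable k : fieldType.
Hypothesis char0 : [pchar k] =i pred0.

Lemma natr_inj_k (m n : nat) : (m%:R : k) = n%:R -> m = n.
Proof.
have H0 : forall q : nat, (q%:R : k) = 0 -> q = 0%N.
  by move=> q /eqP; rewrite (proj1 (pcharf0P k) char0) => /eqP.
wlog lemn : m n / (m <= n)%N.
  by move=> W; case: (leqP m n) => [h|h] e; [apply: W|symmetry; apply: W => //; apply: ltnW].
move=> e; have : ((n - m)%N%:R : k) = 0 by rewrite natrB // e subrr.
by move/H0 => /eqP; rewrite subn_eq0 => h; apply/eqP; rewrite eqn_leq lemn h.
Qed.

Lemma hajos (n : nat) (T : seq nat) (P Q : {poly k}) :
  (size T <= n)%N -> (forall r, P`_r != 0 -> r \in T) ->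
  P = ('X + 1) ^+ n * Q -> P = 0.
Proof.
elim: n T P Q => [|n IH] T P Q hT hsupp hPQ.
  move: hT hsupp; case: T => // _ hs.
  by apply/polyP => r; rewrite coef0; apply/eqP; apply: contraT => /hs.
case: T hT hsupp => [|k0 T'] hT hsupp.
  by apply/polyP => r; rewrite coef0; apply/eqP; apply: contraT => /hsupp.
pose P1 := 'X * P^`() - k0%:R *: P.
pose Q1 := (n.+1)%:R *: ('X * Q) + ('X + 1) * ('X * Q^`() - k0%:R *: Q).
have eP1 : P1 = ('X + 1) ^+ n * Q1.
  rewrite /P1 /Q1 hPQ derivM deriv_exp derivD derivX derivC addr0 mul1r /=.
  rewrite exprS -!mul_polyC.
  rewrite ?polyCB ?polyCMn ?polyC1.
  ring.
have cP1 r : P1`_r = P`_r * (r%:R - k0%:R).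
  rewrite /P1 coefB coefZ coefXM coef_deriv.
  by case: r => [|r] /=; ring.
have P10 : P1 = 0.
  apply: (IH T' P1 Q1) => //; move=> r; rewrite cP1 mulf_eq0 negb_or => /andP[nz ne].
  have := hsupp r nz; rewrite inE => /orP[/eqP er|//].
  by move: ne; rewrite er subrr eqxx.
have Pr r : r != k0 -> P`_r = 0.
  move=> ne; have := cP1 r; rewrite P10 coef0 => /esym/eqP; rewrite mulf_eq0 => /orP[/eqP //|].
  by rewrite subr_eq0 => /eqP /natr_inj_k /eqP; rewrite (negbTE ne).
have eP : P = P`_k0 *: 'X^k0.
  apply/polyP => r; rewrite coefZ coefXn; case: (eqVneq r k0) => [->|ne].
    by rewrite mulr1.
  by rewrite mulr0 Pr.
have : P.[-1] = 0 by rewrite hPQ hornerM horner_exp hornerD hornerX hornerC addNr expr0n /= mul0r.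
rewrite {1}eP hornerZ hornerXn => /eqP; rewrite mulf_eq0 expf_eq0 oppr_eq0 oner_eq0 andbF orbF.
by move=> /eqP c0; rewrite eP c0 scale0r.
Qed.

Lemma coef_sumZ I (r : seq I) (P : pred I) (c : I -> k) (g : I -> {poly k}) p :
  (\sum_(j <- r | P j) c j *: g j)`_p = \sum_(j <- r | P j) c j * (g j)`_p.
Proof. by rewrite coef_sum; apply: eq_bigr => j _; rewrite coefZ. Qed.

Lemma span_full m N (g : 'I_m -> {poly k}) :
  (forall j, (size (g j) <= N)%N) ->
  row_full (\matrix_(j < m, p < N) (g j)`_p) ->
  forall P : {poly k}, (size P <= N)%N -> exists c : 'I_m -> k, P = \sum_j c j *: g j.
Proof.
move=> hs /row_fullP [B hB] P hP.
pose w : 'rV[k]_N := \row_(p < N) P`_p.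
exists (fun j => (w *m B) 0 j).
apply/polyP => p; rewrite coef_sumZ.
case: (ltnP p N) => hpN.
  have h := congr1 (fun M : 'M[k]_(1, N) => M 0 (Ordinal hpN)) (congr1 (mulmx w) hB).
  rewrite /= mulmxA mulmx1 /w [in RHS]mxE !mxE in h.
  rewrite -h; apply: eq_bigr => j _; rewrite !mxE //.
rewrite (leq_sizeP _ _ hP) // big1 // => j _.
by rewrite (leq_sizeP _ _ (hs j)) // mulr0.
Qed.

Lemma span_free N (g : 'I_N -> {poly k}) :
  (forall j, (size (g j) <= N)%N) ->
  (forall c : 'I_N -> k, \sum_j c j *: g j = 0 -> forall j, c j = 0) ->
  forall P : {poly k}, (size P <= N)%N -> exists c : 'I_N -> k, P = \sum_j c j *: g j.
Proof.
move=> hs hind; apply: span_full => //.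
rewrite row_full_unit -row_free_unit; apply: inj_row_free => v hv.
have h0 := hind (fun j => v 0 j).
apply/rowP => j; rewrite mxE; apply: h0.
apply/polyP => p; rewrite coef_sumZ coef0.
case: (ltnP p N) => hpN.
  have h := congr1 (fun M : 'M[k]_(1, N) => M 0 (Ordinal hpN)) hv.
  rewrite /= !mxE in h; rewrite -[X in _ = X]h; apply: eq_bigr => i _; rewrite !mxE //.
by rewrite big1 // => i _; rewrite (leq_sizeP _ _ (hs i)) // mulr0.
Qed.

Lemma span_orth m N (g : 'I_m -> {poly k}) :
  (forall j, (size (g j) <= N)%N) ->
  (forall w : 'rV[k]_N, (forall j, \sum_(p < N) (g j)`_p * w 0 p = 0) -> w = 0) ->
  forall P : {poly k}, (size P <= N)%N -> exists c : 'I_m -> k, P = \sum_j c j *: g j.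
Proof.
move=> hs horth; apply: span_full => //.
rewrite /row_full -mxrank_tr.
have : row_free (\matrix_(j < m, p < N) (g j)`_p)^T.
  apply: inj_row_free => v hv; apply: horth => j.
  have h := congr1 (fun M : 'M[k]_(1, m) => M 0 j) hv.
  rewrite /= !mxE in h; rewrite -[X in _ = X]h; apply: eq_bigr => p _; rewrite !mxE mulrC //.
by rewrite /row_free.
Qed.


Lemma coef_sumXn n (c : 'I_n -> k) (s : 'I_n -> nat) p :
  (\sum_j c j *: 'X^(s j))`_p = \sum_j c j * (p == s j)%:R.
Proof. by rewrite coef_sumZ; apply: eq_bigr => j _; rewrite coefXn. Qed.

Lemma coef_sumXn0 n (c : 'I_n -> k) (s : 'I_n -> nat) p :
  (forall j, s j != p) -> (\sum_j c j *: 'X^(s j))`_p = 0.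
Proof.
move=> h; rewrite coef_sumXn big1 // => j _.
by rewrite eq_sym (negbTE (h j)) mulr0.
Qed.

Lemma coef_sumXn_inj n (c : 'I_n -> k) (s : 'I_n -> nat) j0 :
  injective s -> (\sum_j c j *: 'X^(s j))`_(s j0) = c j0.
Proof.
move=> inj; rewrite coef_sumXn (bigD1 j0) //= eqxx mulr1 big1 ?addr0 //.
move=> j ne; rewrite eq_sym; case: eqP => [/inj e|]; last by rewrite mulr0.
by rewrite e eqxx in ne.
Qed.

Definition lf : {poly k} := 'X + 1.

Lemma size_lf : size lf = 2%N.
Proof. by rewrite /lf -polyC1 size_XaddC. Qed.

Lemma size_lfX d : (size (lf ^+ d) <= d.+1)%N.
Proof. by apply: leq_trans (size_poly_exp_leq _ _) _; rewrite size_lf /= mul1n. Qed.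

Lemma lfX_neq0 d : lf ^+ d != 0.
Proof. by rewrite expf_eq0 -size_poly_eq0 size_lf andbF. Qed.

Lemma sl m n (j : 'I_m) : split (lshift n j) = inl j.
Proof. exact: (unsplitK (inl _)). Qed.
Lemma sr m n (j : 'I_n) : split (rshift m j) = inr j.
Proof. exact: (unsplitK (inr _)). Qed.

Variables (a b al be : nat).
Hypotheses (Ha : (0 < a)%N) (Hb : (0 < b)%N) (Hal : (al <= a)%N) (Hbe : (be <= b)%N).

Definition gapI u (F : {poly k}) :=
  forall p, (u < p + be)%N -> (p < al)%N -> F`_p = 0.
Definition gapJ u (F : {poly k}) :=
  forall p, (u < p + b)%N -> (p < a)%N -> F`_p = 0.
Definition inSI i p := (p <= i)%N && ~~ ((i < p + be)%N && (p < al)%N).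
Definition Tset i :=
  [seq r <- iota 0 (a + b - 1 - i) | (a <= r)%N || ~~ inSI i (a - 1 - r)].

Lemma Tset_uniq i : uniq (Tset i).
Proof. by apply: filter_uniq; apply: iota_uniq. Qed.

Theorem uni_inj d i : (i + d <= a + b - 2)%N -> (d <= size (Tset i))%N ->
  forall F : {poly k}, (size F <= i.+1)%N -> gapI i F -> gapJ (i + d) (lf ^+ d * F) -> gapJ i F.
Proof.
move=> hid hdT.
set t := (i + d)%N; set m := (a + b - 1 - t)%N; set T0 := take d (Tset i).
have hT0 : size T0 = d by rewrite size_takel.
have hT0u : uniq T0 by apply: take_uniq; apply: Tset_uniq.
have hT0m r : r \in T0 -> r \in Tset i by apply: mem_take.
pose g (x : 'I_(m + d)) := match split x with
  | inl j => lf ^+ d * 'X^j | inr j => 'X^(nth 0%N T0 j) end.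
have hs x : (size (g x) <= m + d)%N.
  rewrite /g; case: (split x) => j.
    apply: leq_trans (size_polyMleq _ _) _; rewrite size_polyXn.
    have := size_lfX d; have := ltn_ord j; lia.
  rewrite size_polyXn.
  have : nth 0%N T0 j \in Tset i by apply: hT0m; apply: mem_nth; rewrite hT0.
  rewrite mem_filter mem_iota => /andP[_ /andP[_]]; rewrite /m /t; lia.
have hind (c : 'I_(m + d) -> k) : \sum_x c x *: g x = 0 -> forall x, c x = 0.
  rewrite big_split_ord /= /g.
  under eq_bigr do rewrite sl.
  under [X in _ + X]eq_bigr do rewrite sr.
  set Q := \sum_(j < m) c (lshift d j) *: 'X^j.
  set R := \sum_(j < d) c (rshift m j) *: 'X^(nth 0%N T0 j).
  have -> : \sum_(j < m) c (lshift d j) *: (lf ^+ d * 'X^j) = lf ^+ d * Q.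
    by rewrite /Q mulr_sumr; apply: eq_bigr => j _; rewrite scalerAr.
  move=> /eqP; rewrite addrC addr_eq0 => /eqP eR.
  have R0 : R = 0.
    apply: (@hajos d T0 R (- Q)); first by rewrite hT0.
      move=> r; apply: contraR => hr; rewrite /R coef_sumXn0 // => j.
      by apply: contraNneq hr => <-; apply: mem_nth; rewrite hT0.
    by rewrite eR mulrN.
  have Q0 : Q = 0.
    by move: eR; rewrite R0 => /esym/eqP; rewrite oppr_eq0 mulf_eq0 (negbTE (lfX_neq0 d)) /= => /eqP.
  move=> x; rewrite -(splitK x); case: (split x) => j /=.
    have := coef_sumXn_inj (fun j => c (lshift d j)) j (@val_inj _ _ _).
    by rewrite -/Q Q0 coef0 => <-.
  have inj : injective (fun j : 'I_d => nth 0%N T0 j).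
    move=> j1 j2 /eqP; rewrite nth_uniq ?hT0 // => /eqP; apply: val_inj.
  by have := coef_sumXn_inj (fun j => c (rshift m j)) j inj; rewrite -/R R0 coef0 => <-.
move=> F hF hI hJ p hp1 hp2.
case: (leqP p i) => hpi; last by rewrite (leq_sizeP _ _ hF).
set r := (a - 1 - p)%N.
have hr : (size ('X^r : {poly k}) <= m + d)%N by rewrite size_polyXn /r /m /t; lia.
have [c hc] := span_free hs hind hr.
have e1 : F`_p = ('X^r * F)`_(a - 1).
  rewrite coefXnM; have -> : (a - 1 < r)%N = false by rewrite /r; lia.
  by congr (F`_ _); rewrite /r; lia.
rewrite e1 hc mulr_suml coef_sum big1 // => x _.
rewrite -scalerAl coefZ; apply/eqP; rewrite mulf_eq0; apply/orP; right; apply/eqP.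
rewrite /g; case: (split x) => j.
  rewrite mulrAC mulrC coefXnM; case: ltnP => hj //.
  apply: hJ; rewrite /t; have := ltn_ord j; rewrite /m /t; lia.
set r' := nth 0%N T0 j.
have : r' \in Tset i by apply: hT0m; apply: mem_nth; rewrite hT0.
rewrite mem_filter => /andP[/orP[har|hn] _]; rewrite coefXnM.
  by have -> : (a - 1 < r')%N = true by lia.
case: ltnP => // _.
move: hn; rewrite /inSI negb_and negbK => /orP[hgt|/andP[h1 h2]].
  by rewrite (leq_sizeP _ _ hF) //; lia.
by apply: hI.
Qed.


Theorem uni_surj d i : (i + d <= a + b - 2)%N -> (size (Tset i) <= d)%N ->
  forall G : {poly k}, (size G <= (i + d).+1)%N ->
  exists F : {poly k}, [/\ (size F <= i.+1)%N, gapI i F & gapJ (i + d) (G - lf ^+ d * F)].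
Proof.
move=> hid hdT G hG.
set t := (i + d)%N.
set LI := [seq p <- iota 0 i.+1 | inSI i p].
set LJ := [seq q <- iota 0 t.+1 | ~~ ((t < q + b)%N && (q < a)%N)].
pose g (x : 'I_(size LI + size LJ)) := match split x with
  | inl j => lf ^+ d * 'X^(nth 0%N LI j) | inr j => 'X^(nth 0%N LJ j) end.
have hLI j : (j < size LI)%N -> inSI i (nth 0%N LI j) && (nth 0%N LI j <= i)%N.
  move=> hj; have := mem_nth 0%N hj; rewrite mem_filter mem_iota /= => /andP[h1 h2].
  by rewrite h1 /=; move: h2; rewrite add0n ltnS.
have hLJ j : (j < size LJ)%N ->
    ~~ ((t < nth 0%N LJ j + b)%N && (nth 0%N LJ j < a)%N) && (nth 0%N LJ j <= t)%N.
  move=> hj; have := mem_nth 0%N hj; rewrite mem_filter mem_iota /= => /andP[h1 h2].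
  by rewrite h1 /=; move: h2; rewrite add0n ltnS.
have hs x : (size (g x) <= t.+1)%N.
  rewrite /g; case: (split x) => j.
    apply: leq_trans (size_polyMleq _ _) _; rewrite size_polyXn.
    have := size_lfX d; case/andP: (hLI j (ltn_ord j)) => _ hj; rewrite /t; lia.
  by rewrite size_polyXn ltnS; case/andP: (hLJ j (ltn_ord j)).
have horth (w : 'rV[k]_t.+1) : (forall x, \sum_(p < t.+1) (g x)`_p * w 0 p = 0) -> w = 0.
  move=> hw.
  pose Wp : {poly k} := \poly_(q < t.+1) w 0 (inord q).
  have hwW x : \sum_(p < t.+1) (g x)`_p * w 0 p = \sum_(p < t.+1) (g x)`_p * Wp`_p.
    by apply: eq_bigr => p _; rewrite coef_poly ltn_ord inord_val.
  have hW q : Wp`_q != 0 -> (t < q + b)%N && (q < a)%N.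
    move=> nz; case: (ltnP q t.+1) => hq; last by move: nz; rewrite coef_poly ltnNge hq /= eqxx.
    apply: contraR nz => hc; apply/eqP.
    have qin : q \in LJ by rewrite mem_filter mem_iota hc.
    have hj : (index q LJ < size LJ)%N by rewrite index_mem.
    have := hw (rshift (size LI) (Ordinal hj)); rewrite hwW /g sr /= nth_index //.
    rewrite (bigD1 (Ordinal hq)) //= coefXn eqxx mul1r big1 ?addr0 // => p hp.
    by rewrite coefXn; case: eqP => [e|]; [move: hp; rewrite -(inj_eq val_inj) /= e eqxx | rewrite mul0r].
  pose Wrev : {poly k} := \poly_(r < a) Wp`_(a - 1 - r).
  have pair (h : {poly k}) : (size h <= t.+1)%N ->
      \sum_(p < t.+1) h`_p * Wp`_p = (h * Wrev)`_(a - 1).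
    move=> hh; rewrite coefM.
    have -> : (a - 1).+1 = a by lia.
    have e2 : \sum_(j < a) h`_j * Wrev`_(a - 1 - j) = \sum_(j < a) h`_j * Wp`_j.
      apply: eq_bigr => j _; rewrite coef_poly; have -> : (a - 1 - j < a)%N by lia.
      by congr (_ * Wp`_ _); have := ltn_ord j; lia.
    rewrite e2 (big_ord_widen _ (fun j => h`_j * Wp`_j) (leq_addr a t.+1)).
    rewrite (big_ord_widen _ (fun j => h`_j * Wp`_j) (leq_addl t.+1 a)).
    rewrite [LHS]big_mkcond [RHS]big_mkcond /=; apply: eq_bigr => j _.
    case: (ltnP j t.+1) => h1; case: (ltnP j a) => h2 //.
      case: (eqVneq Wp`_j 0) => [->|nz]; first by rewrite mulr0.
      by have := hW _ nz => /andP[_]; rewrite ltnNge h2.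
    by rewrite (leq_sizeP _ _ hh) // mul0r.
  pose H := lf ^+ d * Wrev.
  have hH p : inSI i p -> (p <= a - 1)%N -> H`_(a - 1 - p) = 0.
    move=> hp hpa.
    have pin : p \in LI by rewrite mem_filter hp mem_iota /= add0n ltnS; case/andP: hp.
    have hj : (index p LI < size LI)%N by rewrite index_mem.
    have := hw (lshift (size LJ) (Ordinal hj)); rewrite hwW /g sl /= nth_index //.
    rewrite pair; last by have := hs (lshift (size LJ) (Ordinal hj)); rewrite /g sl /= nth_index.
    by rewrite mulrAC mulrC -/H coefXnM; case: ltnP => //; lia.
  have sW : (size Wrev <= a + b - 1 - t)%N.
    apply/leq_sizeP => r hr; rewrite coef_poly; case: ltnP => // hra.
    apply/eqP; apply: contraT => nz; have := hW _ nz => /andP[h1 _]; lia.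
  have sH : (size H <= a + b - 1 - i)%N.
    apply: leq_trans (size_polyMleq _ _) _; have := size_lfX d; rewrite /t in sW hid |- *; lia.
  have H0 : H = 0.
    apply: (@hajos d (Tset i) H Wrev) => // r nz.
    rewrite mem_filter mem_iota /= add0n; apply/andP; split; last first.
      by rewrite ltnNge; move: nz; apply: contra => hr; rewrite (leq_sizeP _ _ sH).
    apply/negPn/negP; rewrite negb_or negbK -ltnNge => /andP[hra hin].
    have e : (a - 1 - (a - 1 - r))%N = r by lia.
    have hle : (a - 1 - r <= a - 1)%N by lia.
    by move: nz; rewrite -e (hH _ hin hle) eqxx.
  have Wrev0 : Wrev = 0.
    by move/eqP: H0; rewrite mulf_eq0 (negbTE (lfX_neq0 d)) => /eqP.
  apply/rowP => p; rewrite mxE.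
  have -> : w 0 p = Wp`_p by rewrite coef_poly ltn_ord inord_val.
  case: (ltnP p a) => hpa.
    have := congr1 (fun P : {poly k} => P`_(a - 1 - p)) Wrev0.
    rewrite /= coef0 coef_poly; have -> : (a - 1 - p < a)%N by lia.
    by have -> : (a - 1 - (a - 1 - p))%N = p by lia.
  apply/eqP; apply: contraT => nz; have := hW _ nz => /andP[_]; rewrite ltnNge hpa.
  by [].
have [c hc] := span_orth hs horth hG.
move: hc; rewrite big_split_ord /= /g.
under eq_bigr do rewrite sl.
under [X in _ + X]eq_bigr do rewrite sr.
set F := \sum_(j < size LI) c (lshift (size LJ) j) *: 'X^(nth 0%N LI j).
have -> : \sum_(j < size LI) c (lshift (size LJ) j) *: (lf ^+ d * 'X^(nth 0%N LI j)) = lf ^+ d * F.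
  by rewrite /F mulr_sumr; apply: eq_bigr => j _; rewrite scalerAr.
move=> ->; exists F; split.
- apply/leq_sizeP => p hp; rewrite /F coef_sumXn0 // => j.
  by case/andP: (hLI j (ltn_ord j)) => _ h; apply/eqP => e; move: h; rewrite e; lia.
- move=> p h1 h2; rewrite /F coef_sumXn0 // => j.
  case/andP: (hLI j (ltn_ord j)) => hin _; apply/eqP => e; move: hin.
  by rewrite e /inSI h1 h2 andbF.
- move=> q h1 h2; rewrite addrAC subrr add0r coef_sumXn0 // => j.
  case/andP: (hLJ j (ltn_ord j)) => hn _; apply/eqP => e; move: hn.
  by rewrite e h1 h2.
Qed.


Theorem uni d i :
  (forall F : {poly k}, (size F <= i.+1)%N -> gapI i F -> gapJ (i + d) (lf ^+ d * F) -> gapJ i F)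
  \/ (forall G : {poly k}, (size G <= (i + d).+1)%N ->
       exists F : {poly k}, [/\ (size F <= i.+1)%N, gapI i F & gapJ (i + d) (G - lf ^+ d * F)]).
Proof.
case: (leqP (i + d) (a + b - 2)) => h.
  case: (leqP d (size (Tset i))) => h2.
    by left; apply: uni_inj.
  by right; apply: uni_surj => //; apply: ltnW.
right => G hG; exists 0; split; first by rewrite size_poly0.
  by move=> p _ _; rewrite coef0.
by move=> q h1 h2; exfalso; lia.
Qed.
End Uni.


Section Multi.
Variable k : fieldType.
Implicit Types f g : {mpoly k[2]}.


Definition i0 : 'I_2 := @Ordinal 2 0 isT.
Definition i1 : 'I_2 := @Ordinal 2 1 isT.

Lemma ord2 (j : 'I_2) : j = i0 \/ j = i1.
Proof. by case: j => [[|[|//]]] ? /=; [left|right]; apply: val_inj. Qed.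

Definition hD (j : 'I_2) : {poly k} := if val j == 0%N then 'X else 1.
Definition D (f : {mpoly k[2]}) : {poly k} := mmap (@polyC k) hD f.

Lemma mmap1_hD (m : 'X_{1..2}) : mmap1 hD m = 'X^(m i0).
Proof.
rewrite /mmap1 big_ord_recr big_ord_recr big_ord0 /= mul1r /hD /= expr1n mulr1.
by congr ('X^(m _)); apply: val_inj.
Qed.

Lemma D_X m : D 'X_[m] = 'X^(m i0).
Proof. by rewrite /D mmapX mmap1_hD. Qed.

Lemma DM f g : D (f * g) = D f * D g.
Proof. by rewrite /D rmorphM. Qed.

Lemma D_coef f q : (D f)`_q = \sum_(m <- msupp f) f@_m * (m i0 == q)%:R.
Proof.
rewrite /D /mmap coef_sum; apply: eq_bigr => m _.
by rewrite mmap1_hD coefCM coefXn eq_sym.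
Qed.

Lemma mdeg2 (m : 'X_{1..2}) : mdeg m = (m i0 + m i1)%N.
Proof.
rewrite mdegE big_ord_recr big_ord_recr big_ord0 /= add0n.
by congr (m _ + m _)%N; apply: val_inj.
Qed.

Lemma homog_deg u f m : homogeneous u f -> m \in msupp f -> (m i0 + m i1)%N = u.
Proof. by move=> /dhomogP h /h e; rewrite -e; symmetry; exact: mdeg2. Qed.

Lemma mnm2P (m1 m2 : 'X_{1..2}) : m1 i0 = m2 i0 -> m1 i1 = m2 i1 -> m1 = m2.
Proof. by move=> e0 e1; apply/mnmP => j; case: (ord2 j) => ->. Qed.

Lemma D_coef_homog u f m : homogeneous u f -> m \in msupp f -> (D f)`_(m i0) = f@_m.
Proof.
move=> hf hm; rewrite D_coef (bigD1_seq m) //= ?msupp_uniq // eqxx mulr1 big_seq_cond big1 ?addr0 //.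
move=> m' /andP[hm' ne]; case: eqP => [e|]; last by rewrite mulr0.
have e1 : m' i1 = m i1.
  by have := homog_deg hf hm; have := homog_deg hf hm'; rewrite e; lia.
by move: ne; rewrite (mnm2P e e1) eqxx.
Qed.

Lemma D_size u f : homogeneous u f -> (size (D f) <= u.+1)%N.
Proof.
move=> hf; apply/leq_sizeP => q hq; rewrite D_coef big1_seq // => m /andP[_ hm].
have := homog_deg hf hm; case: eqP => [e|]; last by rewrite mulr0.
by move=> h; exfalso; lia.
Qed.

Lemma mcoeffMX0 (p : {mpoly k[2]}) e m : ~~ (e <= m)%MM -> (p * 'X_[e])@_m = 0.
Proof.
move=> hn; rewrite {1}(mpolyE p) mulr_suml raddf_sum /= big1 // => m' _.
rewrite -scalerAl -mpolyXD mcoeffZ mcoeffX; case: eqP => [e'|]; last by rewrite mulr0.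
by move: hn; rewrite -e' lem_addl.
Qed.

Lemma varxE A : varx k ^+ A = 'X_[U_(i0) *+ A].
Proof. by rewrite /varx mpolyXn. Qed.
Lemma varyE B : vary k ^+ B = 'X_[U_(i1) *+ B].
Proof. by rewrite /vary mpolyXn. Qed.

Lemma leU0 A (m : 'X_{1..2}) : (U_(i0) *+ A <= m)%MM = (A <= m i0)%N.
Proof.
apply/mnm_lepP/idP => [h|h j]; first by have := h i0; rewrite mulmnE mnm1E eqxx mul1n.
by rewrite mulmnE mnm1E; case: (ord2 j) => -> //=; rewrite ?mul0n ?mul1n.
Qed.
Lemma leU1 B (m : 'X_{1..2}) : (U_(i1) *+ B <= m)%MM = (B <= m i1)%N.
Proof.
apply/mnm_lepP/idP => [h|h j]; first by have := h i1; rewrite mulmnE mnm1E eqxx mul1n.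
by rewrite mulmnE mnm1E; case: (ord2 j) => -> //=; rewrite ?mul0n ?mul1n.
Qed.

Lemma ideal_gap u A B f : homogeneous u f -> in_ideal2 (varx k ^+ A) (vary k ^+ B) f ->
  forall q, (u < q + B)%N -> (q < A)%N -> (D f)`_q = 0.
Proof.
move=> hf [U [V ef]] q h1 h2; rewrite D_coef big1_seq // => m /andP[_ hm].
case: eqP => [e|]; last by rewrite mulr0.
have := homog_deg hf hm => hdeg.
rewrite ef mcoeffD varxE varyE !mcoeffMX0 ?addr0 ?mul0r // ?leU0 ?leU1 -?ltnNge; lia.
Qed.

Lemma gap_ideal u A B f : homogeneous u f ->
  (forall q, (u < q + B)%N -> (q < A)%N -> (D f)`_q = 0) ->
  in_ideal2 (varx k ^+ A) (vary k ^+ B) f.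
Proof.
move=> hf hgap.
have hB m : m \in msupp f -> ~~ (A <= m i0)%N -> (B <= m i1)%N.
  move=> hm hA; apply: contraT; rewrite -ltnNge => hlt.
  have := hgap (m i0); rewrite (D_coef_homog hf hm).
  have := homog_deg hf hm => hdeg.
  move=> h; have : f@_m = 0 by apply: h; lia.
  by move=> e0; move: hm; rewrite mcoeff_msupp e0 eqxx.
exists (\sum_(m <- msupp f | (A <= m i0)%N) f@_m *: 'X_[m - U_(i0) *+ A]).
exists (\sum_(m <- msupp f | ~~ (A <= m i0)%N) f@_m *: 'X_[m - U_(i1) *+ B]).
rewrite {1}(mpolyE f) (bigID (fun m : 'X_{1..2} => (A <= m i0)%N)) /= !mulr_suml varxE varyE.
congr (_ + _); rewrite big_seq_cond [RHS]big_seq_cond; apply: eq_bigr => m /andP[hm hc];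
  rewrite -scalerAl -mpolyXD submK //.
- by rewrite leU0.
- by rewrite leU1; apply: hB.
Qed.

Definition mon (p q : nat) : 'X_{1..2} := (U_(i0) *+ p + U_(i1) *+ q)%MM.
Lemma mon0 p q : mon p q i0 = p.
Proof. by rewrite mnmDE !mulmnE !mnm1E /= mul1n mul0n addn0. Qed.
Lemma mon1 p q : mon p q i1 = q.
Proof. by rewrite mnmDE !mulmnE !mnm1E /= mul1n mul0n. Qed.

Definition Hom (i : nat) (F : {poly k}) : {mpoly k[2]} :=
  \sum_(p < i.+1) F`_p *: 'X_[mon p (i - p)].

Lemma Hom_homog i F : homogeneous i (Hom i F).
Proof.
rewrite /homogeneous /Hom; apply: rpred_sum => p _; apply: rpredZ.
rewrite dhomogX; apply/eqP; apply: (etrans (mdeg2 _)); rewrite mon0 mon1; have := ltn_ord p; lia.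
Qed.

Lemma D_Hom i (F : {poly k}) : (size F <= i.+1)%N -> D (Hom i F) = F.
Proof.
move=> hF; rewrite /Hom /D raddf_sum /=.
apply/polyP => q; rewrite coef_sum.
under eq_bigr do rewrite mmapZ -/(D _) D_X mon0 coefCM coefXn.
case: (ltnP q i.+1) => hq.
  rewrite (bigD1 (Ordinal hq)) //= eqxx mulr1 big1 ?addr0 // => p hp.
  by case: eqP => [e|]; [move: hp; rewrite -(inj_eq val_inj) /= e eqxx | rewrite mulr0].
rewrite (leq_sizeP _ _ hF) // big1 // => p _.
by case: eqP => [e|]; [have := ltn_ord p; lia | rewrite mulr0].
Qed.

End Multi.

Unset Implicit Arguments.

Theorem corollary3p2 (k : fieldType) (a b alpha beta : nat) :
  [pchar k] =i pred0 ->
  (0 < a)%N -> (0 < b)%N -> (alpha <= a)%N -> (beta <= b)%N ->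
  strong_Lefschetz_quot
    (in_ideal2 (varx k ^+ alpha) (vary k ^+ beta))
    (in_ideal2 (varx k ^+ a) (vary k ^+ b)).
Proof.
move=> ch Ha Hb Hal Hbe.
have Dl : D (varx k + vary k) = lf k.
  rewrite /D rmorphD /= -!/(D _) /varx /vary !D_X /lf.
  by rewrite !mnm1E /= expr1 expr0.
have hl : homogeneous 1 (varx k + vary k).
  by rewrite /homogeneous; apply: rpredD; rewrite dhomogX; apply/eqP; apply: mdeg1.
have Dp d f : D ((varx k + vary k) ^+ d * f) = lf k ^+ d * D f.
  by rewrite DM -Dl /D rmorphXn.
have hp d i f : homogeneous i f -> homogeneous (i + d) ((varx k + vary k) ^+ d * f).
  move=> hf; have := dhomogM (dhomogMn d hl) hf.
  by rewrite mul1n addnC.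
exists (varx k + vary k); split => // d i hd.
have [hinj|hsurj] := uni ch Ha Hb Hal Hbe d i.
  left => f hf hI hJ.
  apply: (gap_ideal hf); apply: (hinj (D f) (D_size hf)).
    exact: (ideal_gap hf hI).
  move=> q h1 h2; rewrite -Dp; exact: (ideal_gap (hp d i f hf) hJ).
right => g hg hIg.
have [F [hF hFI hFJ]] := hsurj (D g) (D_size hg).
exists (Hom i F); split; first exact: Hom_homog.
  by apply: (gap_ideal (Hom_homog i F)); rewrite D_Hom.
have hh : homogeneous (i + d) (g - (varx k + vary k) ^+ d * Hom i F).
  by rewrite /homogeneous; apply: rpredB => //; apply: hp; apply: Hom_homog.
apply: (gap_ideal hh).
by rewrite /D rmorphB /= -!/(D _) Dp D_Hom.
Qed.
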